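(* For every (nonempty) composition $\alpha$, the fundamental quasi-symmetric function $L_\alpha$ is irreducible both in $\mathrm{QSym}$ and in $K=\mathbb Z[[x_1,x_2,\dots]]$ (power series of bounded degree).
   Context: For a composition $\alpha=(\alpha_1,\dots,\alpha_k)$ of $n$ (positive integers), $D(\alpha)=\{\alpha_1,\dots,\alpha_1+\dots+\alpha_{k-1}\}\subseteq[n-1]$, $M_\beta=\sum_{i_1<\dots<i_l}x_{i_1}^{\beta_1}\cdots x_{i_l}^{\beta_l}$, and $L_\alpha=\sum_{|\beta|=n,\,D(\beta)\subseteq D(\alpha)}M_\beta$. $\mathrm{QSym}\subseteq K$ is the ring of quasi-symmetric functions (bounded-degree series whose coefficient of $x_{i_1}^{a_1}\cdots x_{i_k}^{a_k}$ depends only on $(a_1,\dots,a_k)$ for $i_1<\dots<i_k$). The units of $K$ and $\mathrm{QSym}$ are $\pm1$. *)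

(* Defs.v *)
From mathcomp Require Import all_boot all_order all_algebra.
Set Implicit Arguments. Unset Strict Implicit. Unset Printing Implicit Defensive.
Import GRing.Theory Num.Theory.
Local Open Scope ring_scope.

(* A monomial x_1^{s_0} x_2^{s_1} ... is encoded by its exponent vector
   s : seq nat (entry i = exponent of x_{i+1}); trailing zeros are irrelevant. *)
Definition series := seq nat -> int.

Definition inK (f : series) : Prop :=
  (forall s, f (rcons s 0%N) = f s) /\
  (exists n : nat, forall s, (n < sumn s)%N -> f s = 0).

Fixpoint divs (s : seq nat) : seq (seq nat) :=
  match s with
  | [::] => [:: [::]]
  | e :: s' => [seq i :: t | i <- iota 0 e.+1, t <- divs s']
  end.

Definition subv (s t : seq nat) : seq nat := [seq (x.1 - x.2)%N | x <- zip s t].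

Definition mulS (f g : series) : series :=
  fun s => \sum_(t <- divs s) f t * g (subv s t).

Definition oneS : series := fun s => if sumn s == 0%N then 1 else 0.

(* quasi-symmetric: the coefficient of x_{i1}^{a1}...x_{ik}^{ak}
   (i1<...<ik, a_j>0) depends only on (a1,...,ak), i.e. equals the coefficient
   of x_1^{a1}...x_k^{ak}. *)
Definition compress (s : seq nat) : seq nat := [seq e <- s | e != 0%N].
Definition qsym (f : series) : Prop := forall s, f s = f (compress s).

Definition inQSym (f : series) : Prop := inK f /\ qsym f.

Definition unitIn (P : series -> Prop) (f : series) : Prop :=
  exists u, P u /\ forall s, mulS f u s = oneS s.

Definition irredIn (P : series -> Prop) (f : series) : Prop :=
  [/\ P f, (exists s, f s != 0), ~ unitIn P f &
      forall g h, P g -> P h -> (forall s, mulS g h s = f s) ->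
        unitIn P g \/ unitIn P h].

Definition composition (a : seq nat) : bool := all (fun x => 0 < x)%N a.

Definition Dset (a : seq nat) : seq nat :=
  [seq sumn (take i a) | i <- iota 1 (size a).-1].

(* M_b = sum_{i1<...<il} x_{i1}^{b1}...x_{il}^{bl}: coefficient at s is 1 iff
   the nonzero exponents of s, in order, are exactly b. *)
Definition Mq (b : seq nat) : series :=
  fun s => if compress s == b then 1 else 0.

(* L_a = sum_{|b| = |a|, D(b) ⊆ D(a)} M_b, where b ranges over compositions.
   Since the M_b have disjoint supports (the monomials with compress s = b),
   the coefficient of L_a at s is M_{compress s}(s) = 1 if compress s is such
   a b, and 0 otherwise. *)
Definition Lq (a : seq nat) : series :=
  fun s => let b := compress s in
    if (sumn b == sumn a) && all (fun x => x \in Dset a) (Dset b)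
    then Mq b s else 0.

(* Main.v *)
Require Import Defs.
From mathcomp Require Import all_boot all_order all_algebra all_field.
From mathcomp Require Import zify.
From Stdlib Require Import Classical_Prop.
Set Implicit Arguments. Unset Strict Implicit. Unset Printing Implicit Defensive.
Import GRing.Theory Num.Theory.
Local Open Scope ring_scope.


Definition slice (g : series) (i : nat) : series := fun s => g (i :: s).

Lemma divs_cons e s : divs (e :: s) = [seq j :: t | j <- iota 0 e.+1, t <- divs s].
Proof. by []. Qed.

Lemma subv_cons e s j t : subv (e :: s) (j :: t) = (e - j)%N :: subv s t.
Proof. by []. Qed.

Lemma mulS_cons g h i s : mulS g h (i :: s) =
  \sum_(j < i.+1) mulS (slice g j) (slice h (i - j)%N) s.
Proof.
rewrite /mulS divs_cons big_allpairs_dep.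
rewrite -(big_mkord xpredT (fun j => \sum_(t <- divs s) slice g j t * slice h (i - j)%N (subv s t))).
by rewrite /index_iota subn0; apply: eq_bigr => j _; apply: eq_bigr => t _.
Qed.

Lemma mulS_nil g h : mulS g h [::] = g [::] * h [::].
Proof. by rewrite /mulS /= big_seq1. Qed.

Lemma mulS_ext g g' h h' s : (forall t, g t = g' t) -> (forall t, h t = h' t) ->
  mulS g h s = mulS g' h' s.
Proof. by move=> eg eh; rewrite /mulS; apply: eq_bigr => t _; rewrite eg eh. Qed.

Lemma divs_sumn s t : t \in divs s -> (sumn t + sumn (subv s t))%N = sumn s.
Proof.
elim: s t => [|e s IH] t; first by rewrite inE => /eqP ->.
rewrite divs_cons => /allpairsPdep [j [u [jin uin ->]]].
rewrite subv_cons /= -(IH u uin).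
move: jin; rewrite mem_iota add0n ltnS => je. lia.
Qed.


Section Ev.
Variable R : comNzRingType.

Fixpoint ev (D : nat) (g : series) (ws : seq R) : R :=
  match ws with
  | [::] => (g [::])%:~R
  | w :: ws' => \sum_(i < D.+1) ev D (slice g i) ws' * w ^+ i
  end.

Lemma ev_ext D g g' ws : (forall s, g s = g' s) -> ev D g ws = ev D g' ws.
Proof.
elim: ws g g' => [|w ws IH] g g' e /=; first by rewrite e.
by apply: eq_bigr => i _; rewrite (IH _ (slice g' i)) // => s; apply: e.
Qed.

Lemma ev_zero_on D g ws : (forall s, size s = size ws -> g s = 0) -> ev D g ws = 0.
Proof.
elim: ws g => [|w ws IH] g e /=; first by rewrite e.
by apply: big1 => i _; rewrite IH ?mul0r // => s hs; apply: e; rewrite /= hs.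
Qed.

Lemma ev_sum D m (F : nat -> series) ws :
  ev D (fun s => \sum_(j < m) F j s) ws = \sum_(j < m) ev D (F j) ws.
Proof.
elim: ws F => [|w ws IH] F /=.
  apply: (big_ind2 (fun (a : int) (b : R) => a%:~R = b)) => //.
  by move=> x1 x2 y1 y2 <- <-; rewrite intrD.
rewrite (eq_bigr (fun i : 'I_D.+1 => \sum_(j < m) ev D (slice (F j) i) ws * w ^+ i)).
  by rewrite exchange_big.
by move=> i _; rewrite -mulr_suml -(IH (fun j => slice (F j) i)).
Qed.

Lemma ev_if D (b : bool) F ws : ev D (fun s => if b then F s else 0) ws =
  if b then ev D F ws else 0.
Proof. by case: b; [apply: ev_ext | apply: ev_zero_on]. Qed.

Definition bnd (B : nat) (g : series) := forall s, (B < sumn s)%N -> g s = 0.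

Lemma slice_bnd B g i : bnd B g -> bnd (B - i) (slice g i).
Proof. by move=> hb s hs; apply: hb => /=; lia. Qed.

Lemma slice_big B g i s : bnd B g -> (B < i)%N -> slice g i s = 0.
Proof. by move=> hb hi; apply: hb => /=; lia. Qed.

Lemma ev_mul D B1 B2 g h ws : bnd B1 g -> bnd B2 h -> (B1 + B2 <= D)%N ->
  ev D (mulS g h) ws = ev D g ws * ev D h ws.
Proof.
elim: ws g h B1 B2 => [|w ws IH] g h B1 B2 bg bh hD /=.
  by rewrite mulS_nil intrM.
set pg := \poly_(j < D.+1) ev D (slice g j) ws.
set ph := \poly_(j < D.+1) ev D (slice h j) ws.
have spg : (size pg <= B1.+1)%N.
  apply/leq_sizeP => j hj; rewrite coef_poly; case: ifP => // _.
  by apply: ev_zero_on => s _; apply: slice_big bg _.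
have sph : (size ph <= B2.+1)%N.
  apply/leq_sizeP => j hj; rewrite coef_poly; case: ifP => // _.
  by apply: ev_zero_on => s _; apply: slice_big bh _.
have spgh : (size (pg * ph)%R <= D.+1)%N.
  by apply: leq_trans (size_polyMleq _ _) _; lia.
have e1 : pg.[w] = \sum_(i < D.+1) ev D (slice g i) ws * w ^+ i by rewrite horner_poly.
have e2 : ph.[w] = \sum_(i < D.+1) ev D (slice h i) ws * w ^+ i by rewrite horner_poly.
rewrite -e1 -e2 -hornerM (horner_coef_wide _ spgh).
apply: eq_bigr => i _; congr (_ * _).
rewrite coefM (ev_ext _ _ (fun s => mulS_cons g h i s)).
rewrite (ev_sum D i.+1 (fun j s => mulS (slice g j) (slice h (i - j)) s)).
apply: eq_bigr => j _.
rewrite !coef_poly !ifT; last 2 first.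
- by apply: leq_ltn_trans (leq_subr _ _) (ltn_ord i).
- by apply: leq_ltn_trans (ltn_ord i); rewrite -ltnS.
apply: (IH _ _ (B1 - j)%N (B2 - (i - j))%N); try exact: slice_bnd.
lia.
Qed.

End Ev.


Lemma ev_map (R S : comNzRingType) (f : {rmorphism R -> S}) D g ws :
  ev D g (map f ws) = f (ev D g ws).
Proof.
elim: ws g => [|w ws IH] g /=; first by rewrite rmorph_int.
rewrite rmorph_sum; apply: eq_bigr => i _.
by rewrite IH rmorphM rmorphXn.
Qed.

Lemma ev_cons0 (R : comNzRingType) D g (ws : seq R) :
  ev D g (0 :: ws) = ev D (slice g 0) ws.
Proof.
rewrite /= big_ord_recl expr0 mulr1 big1 ?addr0 // => i _.
by rewrite expr0n /= mulr0.
Qed.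

Lemma bnd_mono B B' g : (B <= B')%N -> bnd B g -> bnd B' g.
Proof. by move=> le hb s hs; apply: hb; lia. Qed.

Lemma exists_nonroot (p : {poly algC}) : p != 0 -> exists x, p.[x] != 0.
Proof.
move=> p0; set rs := [seq i%:R : algC | i <- iota 0 (size p)].
have urs : uniq rs.
  rewrite map_inj_uniq ?iota_uniq // => i j /eqP; rewrite eqr_nat => /eqP.
  done.
have : ~~ all (root p) rs.
  apply/negP => hall; have := max_poly_roots p0 hall.
  by rewrite size_map size_iota ltnn => /(_ urs).
by case/allPn => x _ hx; exists x.
Qed.

Lemma ev_nonvanish D M g h : bnd D g -> bnd D h ->
  (exists s, size s = M /\ g s != 0) -> (exists s, size s = M /\ h s != 0) ->
  exists ws : seq algC, size ws = M /\ ev D g ws != 0 /\ ev D h ws != 0.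
Proof.
elim: M g h => [|M IH] g h bg bh [s1 [hs1 g1]] [s2 [hs2 h2]].
  move: hs1 hs2 g1 h2 => /size0nil -> /size0nil -> g1 h2.
  by exists [::]; rewrite /= !intr_eq0.
case: s1 hs1 g1 => [//|i1 t1] [hs1] g1.
case: s2 hs2 h2 => [//|i2 t2] [hs2] h2.
have i1D : (i1 <= D)%N.
  rewrite leqNgt; apply/negP => hi; move: g1; rewrite bg ?eqxx //= /=; lia.
have i2D : (i2 <= D)%N.
  rewrite leqNgt; apply/negP => hi; move: h2; rewrite bh ?eqxx //= /=; lia.
have [ws [sws [e1 e2]]] := IH (slice g i1) (slice h i2)
  (bnd_mono (leq_subr _ _) (slice_bnd (i:=i1) bg)) (bnd_mono (leq_subr _ _) (slice_bnd (i:=i2) bh))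
  (ex_intro _ t1 (conj hs1 g1)) (ex_intro _ t2 (conj hs2 h2)).
set pg := \poly_(j < D.+1) ev D (slice g j) ws.
set ph := \poly_(j < D.+1) ev D (slice h j) ws.
have pg0 : pg != 0.
  apply: contraNneq e1 => pg0.
  by have := coef_poly D.+1 (fun j => ev D (slice g j) ws) i1; rewrite -/pg pg0 coef0 ltnS i1D => <-.
have ph0 : ph != 0.
  apply: contraNneq e2 => ph0.
  by have := coef_poly D.+1 (fun j => ev D (slice h j) ws) i2; rewrite -/ph ph0 coef0 ltnS i2D => <-.
have [x hx] := exists_nonroot (mulf_neq0 pg0 ph0).
exists (x :: ws); split; first by rewrite /= sws.
rewrite hornerM mulf_eq0 negb_or in hx; case/andP: hx => hx1 hx2.
have -> : ev D g (x :: ws) = pg.[x] by rewrite horner_poly.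
by have -> : ev D h (x :: ws) = ph.[x] by rewrite horner_poly.
Qed.

Lemma mulS_neq0 B1 B2 M g h : bnd B1 g -> bnd B2 h ->
  (exists s, size s = M /\ g s != 0) -> (exists s, size s = M /\ h s != 0) ->
  exists s, size s = M /\ mulS g h s != 0.
Proof.
move=> bg bh eg eh.
have [ws [sws [e1 e2]]] := ev_nonvanish (bnd_mono (leq_addr B2 B1) bg)
  (bnd_mono (leq_addl B1 B2) bh) eg eh.
have : ev (B1 + B2) (mulS g h) ws != 0 by rewrite (ev_mul _ bg bh) // mulf_neq0.
move=> hne; apply: NNPP => hn; move/negP: hne; apply.
apply/eqP/ev_zero_on => s hs; apply/eqP/negPn/negP => hne; apply: hn.
by exists s; rewrite hs sws.
Qed.


Definition comp j (g : series) : series := fun s => if sumn s == j then g s else 0.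
Definition rz (g : series) := forall s, g (rcons s 0%N) = g s.

Lemma sumn_rcons s x : sumn (rcons s x) = (sumn s + x)%N.
Proof. by rewrite -cats1 sumn_cat /= addn0. Qed.

Lemma rz_pad g s k : rz g -> g (s ++ nseq k 0%N) = g s.
Proof.
move=> hr; elim: k => [|k IH]; first by rewrite cats0.
have -> : s ++ nseq k.+1 0%N = rcons (s ++ nseq k 0%N) 0%N.
  by rewrite -cats1 -catA; congr (_ ++ _); elim: k {IH} => //= k ->.
by rewrite hr.
Qed.

Lemma rz_comp j g : rz g -> rz (comp j g).
Proof. by move=> hr s; rewrite /comp sumn_rcons addn0 hr. Qed.

Lemma bnd_comp B j g : bnd B g -> bnd B (comp j g).
Proof. by move=> hb s hs; rewrite /comp hb // if_same. Qed.

Lemma pad_common g h s1 s2 : rz g -> rz h -> g s1 != 0 -> h s2 != 0 ->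
  exists M, (exists s, size s = M /\ g s != 0) /\ (exists s, size s = M /\ h s != 0).
Proof.
move=> rg rh g1 h2; exists (maxn (size s1) (size s2)); split.
  exists (s1 ++ nseq (maxn (size s1) (size s2) - size s1) 0%N).
  by rewrite size_cat size_nseq rz_pad //; split => //; lia.
exists (s2 ++ nseq (maxn (size s1) (size s2) - size s2) 0%N).
by rewrite size_cat size_nseq rz_pad //; split => //; lia.
Qed.

Lemma ex_min_P (P : nat -> Prop) j0 : P j0 ->
  exists a, P a /\ forall j, (j < a)%N -> ~ P j.
Proof.
elim: j0 {-2}j0 (leqnn j0) => [|m IH] j0 hj Pj0.
  by exists j0; split => // j; move: hj; lia.
case: (classic (exists j, (j < j0)%N /\ P j)) => [[j [hj' Pj]]|hn].
  by apply: (IH j) => //; lia.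
exists j0; split => // j hj' Pj; apply: hn; by exists j.
Qed.

Lemma ex_max_P (P : nat -> Prop) B j0 : P j0 -> (forall j, P j -> (j <= B)%N) ->
  exists A, P A /\ forall j, (A < j)%N -> ~ P j.
Proof.
move=> Pj0 hB.
have [k [[kB Pk] hk]] := @ex_min_P (fun k => (k <= B)%N /\ P (B - k)%N) (B - j0)%N
  (conj (leq_subr _ _) (eq_ind _ P Pj0 _ (esym (subKn (hB _ Pj0))))).
exists (B - k)%N; split => // j hj Pj.
have jB := hB _ Pj.
apply: (hk (B - j)%N); first by lia.
by split; [exact: leq_subr | rewrite subKn].
Qed.

Lemma mulS_low a b g h s : (forall t, (sumn t < a)%N -> g t = 0) ->
  (forall t, (sumn t < b)%N -> h t = 0) -> sumn s = (a + b)%N ->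
  mulS g h s = mulS (comp a g) (comp b h) s.
Proof.
move=> lg lh hs; rewrite /mulS; apply: eq_big_seq => t tin.
have := divs_sumn tin; rewrite /comp hs => e.
case: (ltngtP (sumn t) a) => ht.
- by rewrite lg // !mul0r.
- by rewrite (lh (subv s t)) ?mulr0 ?mul0r //; lia.
- have -> : sumn (subv s t) = b by lia.
  by rewrite eqxx.
Qed.

Lemma mulS_top a b g h s : (forall t, (a < sumn t)%N -> g t = 0) ->
  (forall t, (b < sumn t)%N -> h t = 0) -> sumn s = (a + b)%N ->
  mulS g h s = mulS (comp a g) (comp b h) s.
Proof.
move=> lg lh hs; rewrite /mulS; apply: eq_big_seq => t tin.
have := divs_sumn tin; rewrite /comp hs => e.
case: (ltngtP (sumn t) a) => ht.
- by rewrite (lh (subv s t)) ?mulr0 ?mul0r //; lia.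
- by rewrite lg // !mul0r.
- have -> : sumn (subv s t) = b by lia.
  by rewrite eqxx.
Qed.

Lemma mulS_comp_homog a b g h s : mulS (comp a g) (comp b h) s != 0 -> sumn s = (a + b)%N.
Proof.
apply: contraNeq => hs; rewrite /mulS big_seq big1 // => t tin.
have := divs_sumn tin; rewrite /comp => e.
case: eqP => ha; last by rewrite mul0r.
case: eqP => hb; last by rewrite mulr0.
by exfalso; apply/eqP: hs; lia.
Qed.

Lemma homog_factor g h f n B1 B2 : rz g -> rz h -> bnd B1 g -> bnd B2 h ->
  (forall s, mulS g h s = f s) -> (forall s, f s != 0 -> sumn s = n) ->
  (exists s, f s != 0) ->
  exists d e, (d + e = n)%N /\ (forall s, g s != 0 -> sumn s = d) /\
    (forall s, h s != 0 -> sumn s = e).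
Proof.
move=> rg rh bg bh hf fh [s0 f0].
have gnz : exists s, g s != 0.
  apply: NNPP => hn; move: f0; rewrite -hf /mulS big1 ?eqxx // => t _.
  have -> : g t = 0 by apply/eqP/negPn/negP => hne; apply: hn; exists t.
  by rewrite mul0r.
have hnz : exists s, h s != 0.
  apply: NNPP => hn; move: f0; rewrite -hf /mulS big1 ?eqxx // => t _.
  have -> : h (subv s0 t) = 0 by apply/eqP/negPn/negP => hne; apply: hn; exists (subv s0 t).
  by rewrite mulr0.
case: gnz => sg g0; case: hnz => sh h0.
pose Pg j := exists s, sumn s = j /\ g s != 0.
pose Ph j := exists s, sumn s = j /\ h s != 0.
have bPg : forall j, Pg j -> (j <= B1)%N.
  move=> j [s [<- gs]]; rewrite leqNgt; apply/negP => hl; move: gs; rewrite bg ?eqxx //.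
have bPh : forall j, Ph j -> (j <= B2)%N.
  move=> j [s [<- hs]]; rewrite leqNgt; apply/negP => hl; move: hs; rewrite bh ?eqxx //.
have [a [[sa [esa ga]] la]] := @ex_min_P Pg (sumn sg) (ex_intro _ sg (conj erefl g0)).
have [A [[sA [esA gA]] lA]] := @ex_max_P Pg B1 (sumn sg) (ex_intro _ sg (conj erefl g0)) bPg.
have [b [[sb [esb hb]] lb]] := @ex_min_P Ph (sumn sh) (ex_intro _ sh (conj erefl h0)).
have [B [[sB [esB hB]] lB]] := @ex_max_P Ph B2 (sumn sh) (ex_intro _ sh (conj erefl h0)) bPh.
have lowg : forall t, (sumn t < a)%N -> g t = 0.
  by move=> t ht; apply/eqP/negPn/negP => hne; apply: (la _ ht); exists t.
have lowh : forall t, (sumn t < b)%N -> h t = 0.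
  by move=> t ht; apply/eqP/negPn/negP => hne; apply: (lb _ ht); exists t.
have topg : forall t, (A < sumn t)%N -> g t = 0.
  by move=> t ht; apply/eqP/negPn/negP => hne; apply: (lA _ ht); exists t.
have toph : forall t, (B < sumn t)%N -> h t = 0.
  by move=> t ht; apply/eqP/negPn/negP => hne; apply: (lB _ ht); exists t.
have key1 : (a + b)%N = n.
  have cga : comp a g sa != 0 by rewrite /comp esa eqxx.
  have chb : comp b h sb != 0 by rewrite /comp esb eqxx.
  have [M [w1 w2]] := pad_common (rz_comp a rg) (rz_comp b rh) cga chb.
  have [s [_ hs]] := mulS_neq0 (bnd_comp a bg) (bnd_comp b bh) w1 w2.
  have es := mulS_comp_homog hs.
  by rewrite -(mulS_low lowg lowh es) hf in hs; rewrite -(fh _ hs) es.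
have key2 : (A + B)%N = n.
  have cga : comp A g sA != 0 by rewrite /comp esA eqxx.
  have chb : comp B h sB != 0 by rewrite /comp esB eqxx.
  have [M [w1 w2]] := pad_common (rz_comp A rg) (rz_comp B rh) cga chb.
  have [s [_ hs]] := mulS_neq0 (bnd_comp A bg) (bnd_comp B bh) w1 w2.
  have es := mulS_comp_homog hs.
  by rewrite -(mulS_top topg toph es) hf in hs; rewrite -(fh _ hs) es.
have aA : (a <= A)%N.
  by rewrite leqNgt; apply/negP => hl; apply: (lA _ hl); exists sa.
have bB : (b <= B)%N.
  by rewrite leqNgt; apply/negP => hl; apply: (lB _ hl); exists sb.
exists a, b; split => //; split => s hs.
  have h1 : ~ (sumn s < a)%N by move=> hl; move: hs; rewrite lowg ?eqxx.
  have h2 : ~ (A < sumn s)%N by move=> hl; move: hs; rewrite topg ?eqxx.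
  lia.
have h1 : ~ (sumn s < b)%N by move=> hl; move: hs; rewrite lowh ?eqxx.
have h2 : ~ (B < sumn s)%N by move=> hl; move: hs; rewrite toph ?eqxx.
lia.
Qed.


Fixpoint coarse (a b : seq nat) : bool :=
  match a with
  | [::] => b == [::]
  | x :: a' => match b with
    | [::] => false
    | y :: b' => if x == y then coarse a' b'
                 else (x < y)%N && coarse a' ((y - x)%N :: b')
    end
  end.

Lemma compress_cons0 s : compress (0%N :: s) = compress s.
Proof. by []. Qed.

Lemma compress_consS i s : (0 < i)%N -> compress (i :: s) = i :: compress s.
Proof. by rewrite /compress /=; case: i. Qed.

Lemma sumn_compress s : sumn (compress s) = sumn s.
Proof. by elim: s => //= x s IH; case: x => //= x; rewrite IH. Qed.

Lemma composition_compress s : composition (compress s).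
Proof. by elim: s => //= x s IH; case: x => //= x. Qed.

Lemma compress_rcons0 s : compress (rcons s 0%N) = compress s.
Proof. by rewrite /compress filter_rcons /= . Qed.

Lemma compress_idem s : compress (compress s) = compress s.
Proof. by rewrite /compress filter_id. Qed.

Lemma Dset_cons y b : Dset (y :: b) =
  if b is [::] then [::] else y :: map (addn y) (Dset b).
Proof.
case: b => [//|z b]; rewrite /Dset /=.
rewrite addn0; congr (_ :: _).
rewrite (iotaDl 1 1) -!map_comp; apply: eq_map => i /=.
by [].
Qed.

Lemma Dset_pos b x : composition b -> x \in Dset b -> (0 < x)%N.
Proof.
elim: b x => [//|y b IH] x /= /andP [y0 cb]; rewrite Dset_cons.
case: b IH cb => [//|z b] IH cb; rewrite inE => /orP [/eqP -> //|].
by case/mapP => u _ ->; rewrite addn_gt0 y0.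
Qed.

Lemma all_mem_shift x L M : all (fun z => 0 < z)%N M ->
  all (fun z => z \in x :: map (addn x) L) (map (addn x) M) = all (fun z => z \in L) M.
Proof.
elim: M => //= m M IH /andP [m0 hM]; rewrite IH //; congr (_ && _).
rewrite inE (mem_map (@addnI x)); have -> : (x + m == x)%N = false by lia.
by [].
Qed.

Lemma Dset_all_pos b : composition b -> all (fun z => 0 < z)%N (Dset b).
Proof. by move=> cb; apply/allP => z; apply: Dset_pos. Qed.

Lemma sumn_pos b : composition b -> b != [::] -> (0 < sumn b)%N.
Proof. by case: b => //= y b /andP [y0 _] _; rewrite addn_gt0 y0. Qed.

Lemma coarse_Dset a b : composition a -> composition b ->
  ((sumn b == sumn a) && all (fun x => x \in Dset a) (Dset b)) = coarse a b.
Proof.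
elim: a b => [|x a IH] b ca cb.
  case: b cb => [//|y b] /= /andP [y0 _].
  by have -> : (y + sumn b == 0)%N = false by lia.
case: b cb => [|y b] cb.
  move: ca => /= /andP [x0 _].
  by have -> : (0 == x + sumn a)%N = false by lia.
move: ca cb => /= /andP [x0 ca] /andP [y0 cb].
rewrite (Dset_cons x a) (Dset_cons y b).
case: (ltngtP x y) => hxy.
- have cb' : composition ((y - x)%N :: b) by rewrite /= cb andbT subn_gt0.
  rewrite -IH // (Dset_cons (y - x) b) /=.
  have -> : (y + sumn b == x + sumn a)%N = (y - x + sumn b == sumn a)%N.
    by apply/idP/idP => /eqP h; apply/eqP; lia.
  case: b cb cb' => [//|z b] cb cb'.
  case: a ca IH => [|w a] ca IH.
    by rewrite /= andbF.
  have -> : y :: map (addn y) (Dset (z :: b)) =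
      map (addn x) ((y - x)%N :: map (addn (y - x)) (Dset (z :: b))).
    rewrite /= -map_comp; congr (_ :: _); first by lia.
    by apply: eq_map => u /=; lia.
  rewrite all_mem_shift //= subn_gt0 hxy /=.
  by rewrite all_map; apply/allP => u /(Dset_pos cb) /= u0; lia.
- rewrite [RHS]/=; case: b cb => [|z b] cb.
    by rewrite /= andbT; apply/negbTE/eqP; lia.
  case: a ca IH => [|w a] ca IH; first by rewrite /= andbF.
  rewrite /= inE; have -> : (y == x) = false by apply/eqP; lia.
  have -> : (y \in map (addn x) (Dset (w :: a))) = false.
    by apply/negbTE/negP => /mapP [u _]; lia.
  by rewrite andbF.
- subst y; rewrite -IH // eqn_add2l.
  case: b cb => [|z b] cb; first by rewrite /= andbT.
  case: a ca IH => [|w a] ca IH.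
    rewrite /= andbF; apply/esym/negbTE; apply/negP => /andP [/eqP e _].
    by move: cb => /= /andP [z0 _]; lia.
  rewrite -/(map (addn x) (x :: _)) /= mem_head /=.
  by rewrite all_mem_shift // Dset_all_pos.
Qed.

Lemma take_pos a m : composition a -> a != [::] -> (0 < m)%N -> (0 < sumn (take m a))%N.
Proof.
case: a => [//|y a] /= /andP [y0 _] _; case: m => [//|m] _ /=.
by rewrite addn_gt0 y0.
Qed.

Lemma composition_drop a m : composition a -> composition (drop m a).
Proof. by move=> ca; rewrite /composition -(cat_take_drop m a) all_cat in ca; case/andP: ca. Qed.

Lemma Lq_coarse a s : composition a -> Lq a s = if coarse a (compress s) then 1 else 0.
Proof. by move=> ca; rewrite /Lq /Mq eqxx coarse_Dset // composition_compress. Qed.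

Lemma coarse_cons_sum a i c : composition a -> (0 < i)%N ->
  (if coarse a (i :: c) then 1 else 0 : int) =
  \sum_(m < (size a).+1) (if i == sumn (take m a) then (if coarse (drop m a) c then 1 else 0) else 0).
Proof.
elim: a i => [|x a IH] i ca i0.
  by rewrite big_ord1 /=; have -> : (i == 0)%N = false by lia.
move: (ca) => /= /andP [x0 ca'].
rewrite big_ord_recl /=; have -> : (i == 0)%N = false by lia.
rewrite add0r.
case: (ltngtP x i) => hxi.
- rewrite (IH (i - x)%N ca') ?subn_gt0 //; apply: eq_bigr => m _ /=.
  have -> : (i == x + sumn (take m a))%N = (i - x == sumn (take m a))%N.
    by apply/idP/idP => /eqP h; apply/eqP; lia.
  by [].
- rewrite big1 // => m _ /=; have -> : (i == x + sumn (take m a))%N = false by lia.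
  by [].
- subst i; rewrite big_ord_recl /= take0 drop0 /= addn0 eqxx.
  rewrite big1 ?addr0 // => m _ /=.
  have hp := take_pos (m := m.+1) ca'.
  have an0 : (0 < size a)%N := leq_ltn_trans (leq0n m) (ltn_ord m).
  have an : a != [::] by apply/eqP => ea; move: an0; rewrite ea.
  have := hp an isT.
  by move=> hp'; have -> : (x == x + sumn (take m.+1 a))%N = false by lia.
Qed.

Lemma Lq_slice a i s : composition a -> Lq a (i :: s) =
  \sum_(m < (size a).+1) (if i == sumn (take m a) then Lq (drop m a) s else 0).
Proof.
move=> ca; case: i => [|i].
  rewrite big_ord_recl /= take0 drop0 /= big1 ?addr0.
    by rewrite !Lq_coarse.
  move=> m _.
  have an0 : (0 < size a)%N := leq_ltn_trans (leq0n m) (ltn_ord m).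
  have an : a != [::] by apply/eqP => ea; move: an0; rewrite ea.
  by have := take_pos (m := m.+1) ca an isT; case: (sumn _).
rewrite Lq_coarse // compress_consS // coarse_cons_sum //.
by apply: eq_bigr => m _; rewrite Lq_coarse // composition_drop.
Qed.


Section Cf.
Variable R : comNzRingType.

Fixpoint Cf (b : seq nat) (ws : seq R) : R :=
  match ws with
  | [::] => (b == [::])%:R
  | w :: ws' => \sum_(m < (size b).+1) w ^+ (sumn (take m b)) * Cf (drop m b) ws'
  end.

Lemma Cf_nil ws : Cf [::] ws = 1.
Proof. by elim: ws => //= w ws IH; rewrite big_ord1 /= expr0 mul1r IH. Qed.

Lemma sumn_take_le a m : (sumn (take m a) <= sumn a)%N.
Proof. by rewrite -{2}(cat_take_drop m a) sumn_cat leq_addr. Qed.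

Lemma sumn_drop_le a m : (sumn (drop m a) <= sumn a)%N.
Proof. by rewrite -{2}(cat_take_drop m a) sumn_cat leq_addl. Qed.

Lemma ev_Lq D a ws : composition a -> (sumn a <= D)%N -> ev D (Lq a) ws = Cf a ws.
Proof.
elim: ws a => [|w ws IH] a ca aD /=.
  rewrite Lq_coarse //; case: a {ca aD} => [|x a] /=; first by [].
  by rewrite mulr0z.
rewrite (eq_bigr (fun i : 'I_D.+1 => \sum_(m < (size a).+1)
   (if (nat_of_ord i == sumn (take m a))%N then Cf (drop m a) ws * w ^+ i else 0))); last first.
  move=> i _; rewrite (ev_ext _ _ (fun s => Lq_slice i s ca)).
  rewrite (ev_sum D (size a).+1 (fun m s => if (nat_of_ord i == sumn (take m a))%N then Lq (drop m a) s else 0)).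
  rewrite mulr_suml; apply: eq_bigr => m _; rewrite ev_if.
  case: ifP => [_|_]; last by rewrite mul0r.
  congr (_ * _); rewrite -(IH (drop m a)); first by apply: ev_ext.
    exact: composition_drop.
  exact: leq_trans (sumn_drop_le a m) aD.
rewrite exchange_big; apply: eq_bigr => m _.
rewrite -big_mkcond (big_ord1_eq _ (fun j => Cf (drop m a) ws * w ^+ j)) ifT; first by rewrite mulrC.
by rewrite ltnS; apply: leq_trans (sumn_take_le a m) aD.
Qed.

Lemma Cf_scale c b ws : Cf b (map (fun w => c * w) ws) = c ^+ (sumn b) * Cf b ws.
Proof.
elim: ws b => [|w ws IH] b /=.
  by case: b => [|x b] /=; rewrite ?expr0 ?mul1r ?mulr0.
rewrite mulr_sumr; apply: eq_bigr => m _.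
rewrite IH exprMn mulrCA mulrA mulrA -exprD -mulrA.
by rewrite addnC -sumn_cat cat_take_drop.
Qed.

End Cf.

Lemma Cf_map (R S : comNzRingType) (f : {rmorphism R -> S}) b ws :
  Cf b (map f ws) = f (Cf b ws).
Proof.
elim: ws b => [|w ws IH] b /=; first by rewrite rmorph_nat.
rewrite rmorph_sum; apply: eq_bigr => m _.
by rewrite IH rmorphM rmorphXn.
Qed.


Lemma sum_shift (F : nat -> algC) i l : (i <= l)%N ->
  \sum_(m < (l - i).+1) F (m + i)%N = \sum_(j < l.+1) (if (i <= j)%N then F j else 0).
Proof.
move=> il; rewrite -big_mkcond /=.
transitivity (\sum_(i <= j < l.+1) F j); last first.
  by rewrite big_geq_mkord; apply: eq_bigl => j.
have e := big_addn 0 l.+1 i xpredT F; rewrite add0n in e; rewrite e big_mkord.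
have -> : (l.+1 - i = (l - i).+1)%N by lia.
by apply: eq_bigl.
Qed.

Lemma sumn_drop_lt b i j : composition b -> (i < j)%N -> (j <= size b)%N ->
  (sumn (drop j b) < sumn (drop i b))%N.
Proof.
move=> cb ij jb.
rewrite -[drop i b](cat_take_drop (j - i)) drop_drop subnK ?(ltnW ij) // sumn_cat.
have hs : (0 < size (drop i b))%N by rewrite size_drop; lia.
have hn : drop i b != [::] by move: hs; case: (drop i b).
have := take_pos (m := (j - i)%N) (composition_drop i cb) hn.
rewrite subn_gt0 ij => /(_ isT) hp; lia.
Qed.

Section Roots.
Variables (L : nat) (z : algC).
Hypothesis pz : L.-primitive_root z.

Definition Gv N := [seq z ^+ i | i <- iota 0 N].

Lemma Gv_S N : Gv N.+1 = 1 :: map (fun w => z * w) (Gv N).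
Proof.
rewrite /Gv /= expr0; congr (_ :: _).
rewrite (iotaDl 1 0) -!map_comp; apply: eq_map => i /=.
by rewrite exprS.
Qed.

Lemma Cf_Gv_S b N : Cf b (Gv N.+1) =
  \sum_(m < (size b).+1) z ^+ (sumn (drop m b)) * Cf (drop m b) (Gv N).
Proof.
rewrite Gv_S /=; apply: eq_bigr => m _.
by rewrite expr1n mul1r Cf_scale.
Qed.

Lemma Cf_Gv_vanish b : composition b -> b != [::] -> (sumn b < L)%N ->
  Cf b (Gv L) = 0.
Proof.
move=> cb bn bL.
set l := size b.
pose mu (i : nat) := sumn (drop (l - i) b).
pose A : 'M[algC]_l.+1 := \matrix_(i, j) (if (j <= i)%N then z ^+ (mu j) else 0).
pose u N : 'cV[algC]_l.+1 := \col_i Cf (drop (l - i) b) (Gv N).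
have uS : forall N, u N.+1 = A *m u N.
  move=> N; apply/matrixP => i k; rewrite !mxE.
  rewrite Cf_Gv_S size_drop.
  have li : (l - (l - i) = i)%N by have := ltn_ord i; lia.
  rewrite li (reindex_inj rev_ord_inj) /=.
  pose H (j : nat) := z ^+ mu j * Cf (drop (l - j) b) (Gv N).
  rewrite (eq_bigr (fun j : 'I_l.+1 => if (j < i.+1)%N then H j else 0)); last first.
    by move=> j _; rewrite !mxE ltnS; case: ifP => //; rewrite mul0r.
  rewrite -big_mkcond -(big_ord_widen l.+1 H (ltn_ord i)).
  apply: eq_bigr => m _; rewrite /H /mu !drop_drop.
  by have -> : (i.+1 - m.+1 + (l - i) = l - m)%N by have := ltn_ord m; have := ltn_ord i; lia.
have uN : forall N, u N = A ^+ N *m u 0.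
  elim=> [|N IH]; first by rewrite expr0 -idmxE mul1mx.
  by rewrite uS IH mulmxA exprS mulmxE.
have AL : A ^+ L = 1.
  have tr : is_trig_mx A by apply/is_trig_mxP => i j ij; rewrite mxE leqNgt ij.
  have hdiv : char_poly A %| 'X^L - 1.
    rewrite (char_poly_trig tr).
    rewrite -(big_map (fun i : 'I_l.+1 => A i i) xpredT (fun x => 'X - x%:P)).
    apply: uniq_roots_dvdp.
      apply/allP => x /mapP [i _ ->]; rewrite mxE leqnn /root !hornerE.
      by rewrite exprAC (prim_expr_order pz) expr1n subrr.
    rewrite uniq_rootsE map_inj_uniq ?index_enum_uniq // => i j.
    rewrite !mxE !leqnn => /eqP; rewrite (eq_prim_root_expr pz).
    have hmu : forall k, (mu k < L)%N by move=> k; apply: leq_ltn_trans bL; apply: sumn_drop_le.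
    rewrite !modn_small // => /eqP e; apply: val_inj => /=.
    have hi := ltn_ord i; have hj := ltn_ord j.
    case: (ltngtP (l - i) (l - j))%N => h.
    - by have := sumn_drop_lt cb h (leq_subr _ _); rewrite /mu in e; rewrite e ltnn.
    - by have := sumn_drop_lt cb h (leq_subr _ _); rewrite /mu in e; rewrite e ltnn.
    - by move: h; lia.
  case/dvdpP: hdiv => q hq.
  have := congr1 (horner_mx A) hq.
  rewrite rmorphM /= Cayley_Hamilton mulr0 rmorphB rmorphXn rmorph1 /= horner_mx_X.
  by move/eqP; rewrite subr_eq0 => /eqP.
have := congr1 (fun M : 'cV_l.+1 => M ord_max 0) (uN L).
rewrite AL -idmxE mul1mx !mxE /= subnn drop0 => ->.
by rewrite /= (negbTE bn).
Qed.

End Roots.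


Lemma Cf_one_cons (R : comNzRingType) b (ws : seq R) : b != [::] ->
  Cf b (1 :: ws) = Cf b ws + Cf (behead b) (1 :: ws).
Proof.
case: b => [//|x b] _ /=.
rewrite big_ord_recl /= expr1n mul1r; congr (_ + _).
by apply: eq_bigr => m _; rewrite !expr1n.
Qed.

Lemma Cf_cons (R : comNzRingType) b (w : R) ws :
  Cf b (w :: ws) = \sum_(m < (size b).+1) w ^+ sumn (take m b) * Cf (drop m b) ws.
Proof. by []. Qed.

Lemma Xn_factor (p q : {poly algC}) n d e : p * q = 'X^n ->
  (size p <= d.+1)%N -> (size q <= e.+1)%N -> (d + e)%N = n -> (0 < d)%N -> p`_0 = 0.
Proof.
move=> hpq sp sq hde d0; apply/eqP; apply: contraT => p0.
have cp : coprimep p 'X.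
  by have := coprimep_XsubC p 0; rewrite subr0 /root horner_coef0 p0 => ->.
have cpn : coprimep 'X^n p by rewrite coprimep_sym coprimep_expr.
have hd : 'X^n %| q by rewrite -(Gauss_dvdpr q cpn) hpq dvdpp.
have q0 : q != 0.
  apply/eqP => q0; move: hpq; rewrite q0 mulr0 => /esym /eqP.
  by rewrite -size_poly_eq0 size_polyXn.
have := dvdp_leq q0 hd; rewrite size_polyXn => h; have h2 := leq_trans h sq; move: h2; clear -hde d0; lia.
Qed.

Lemma coef1_XaddC j : (('X + 1) ^+ j : {poly algC})`_1 = j%:R.
Proof.
elim: j => [|j IH]; first by rewrite expr0 coef1.
rewrite exprSr mulrDr mulr1 coefD coefMX /= IH.
have -> : (('X + 1) ^+ j : {poly algC})`_0 = 1.
  by rewrite -horner_coef0 horner_exp !hornerE expr1n.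
by rewrite -add1n natrD.
Qed.

Lemma behead_drop (s : seq nat) m : behead (drop m s) = drop m.+1 s.
Proof. by rewrite -drop1 drop_drop add1n. Qed.

Lemma drop_nonnil (s : seq nat) m : (m < size s)%N -> drop m s != [::].
Proof. move=> hm; apply/eqP => e; have := size_drop m s; rewrite e /= => h; by move: hm; rewrite -subn_gt0 -h. Qed.

Lemma evX (f : series) D (U : seq algC) :
  ev D f ('X :: map polyC U) = \poly_(i < D.+1) ev D (slice f i) U.
Proof.
rewrite /= poly_def; apply: eq_bigr => i _.
by rewrite ev_map mul_polyC.
Qed.

Lemma core a g h d e : composition a -> a != [::] -> rz g -> rz h ->
  (forall s, g s != 0 -> sumn s = d) -> (forall s, h s != 0 -> sumn s = e) ->
  (d + e)%N = sumn a -> (0 < d)%N -> (0 < e)%N ->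
  (forall s, mulS g h s = Lq a s) -> False.
Proof.
move=> ca an rg rh hg hh hde d0 e0 hf.
set n := sumn a in hde.
have [z pz] := C_prim_root_exists (ltn0Sn n).
have bg : bnd d g.
  by move=> s hs; apply/eqP/negPn/negP => /hg es; move: hs; rewrite es ltnn.
have bh : bnd e h.
  by move=> s hs; apply/eqP/negPn/negP => /hh es; move: hs; rewrite es ltnn.
set U := Gv z n.+1.
set V := map (fun w => z * w) (Gv z n).
have UV : U = 1 :: V by rewrite /U Gv_S.
have van : forall m, (m < size a)%N -> Cf (drop m a) U = 0.
  move=> m hm; apply: Cf_Gv_vanish => //.
  - exact: composition_drop.
  - exact: drop_nonnil.
  - by rewrite ltnS sumn_drop_le.
have cV : forall m, (m < size a)%N -> Cf (drop m a) V = - (m.+1 == size a)%:R.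
  move=> m hm; have := Cf_one_cons V (drop_nonnil hm).
  rewrite -UV van // behead_drop UV => /esym/eqP; rewrite addr_eq0 => /eqP ->.
  case: eqP => [ee|hne]; first by rewrite ee drop_size Cf_nil.
  rewrite -UV van ?oppr0 //; lia.
have mul_ev : forall (ws : seq {poly algC}), ev n g ws * ev n h ws = Cf a ws.
  move=> ws; rewrite -(ev_mul _ bg bh) ?hde // (ev_ext _ _ hf) ev_Lq //.
pose Ag := \poly_(i < n.+1) ev n (slice g i) U.
pose Ah := \poly_(i < n.+1) ev n (slice h i) U.
have sAg : (size Ag <= d.+1)%N.
  apply/leq_sizeP => j hj; rewrite coef_poly; case: ifP => // _.
  by apply: ev_zero_on => s _; apply: slice_big bg _.
have sAh : (size Ah <= e.+1)%N.
  apply/leq_sizeP => j hj; rewrite coef_poly; case: ifP => // _.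
  by apply: ev_zero_on => s _; apply: slice_big bh _.
have hAA : Ag * Ah = 'X^n.
  rewrite /Ag /Ah -!evX mul_ev Cf_cons big_ord_recr big1 ?add0r.
    by rewrite take_size drop_size Cf_nil mulr1 /= add0r.
  by move=> m _; rewrite Cf_map van /= ?polyC0 ?mulr0.
have g0 : ev n (slice g 0) U = 0.
  by have := Xn_factor hAA sAg sAh hde d0; rewrite coef_poly.
have h0 : ev n (slice h 0) U = 0.
  have hAA' : Ah * Ag = 'X^n by rewrite mulrC.
  have hed : (e + d)%N = n by rewrite addnC.
  by have := Xn_factor hAA' sAh sAg hed e0; rewrite coef_poly.
set W := ('X + 1) :: map polyC V.
pose Pg := ev n (slice g 0) W.
pose Ph := ev n (slice h 0) W.
have mapW : map (horner_eval 0) W = U.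
  rewrite UV /= horner_evalE !hornerE; congr (_ :: _).
  rewrite -map_comp -[RHS]map_id; apply: eq_map => x /=.
  by rewrite horner_evalE hornerC.
have Pg0 : Pg.[0] = 0.
  by rewrite -horner_evalE /Pg -ev_map mapW g0.
have Ph0 : Ph.[0] = 0.
  by rewrite -horner_evalE /Ph -ev_map mapW h0.
have hPP : Pg * Ph = Cf a W.
  have := mul_ev (0 :: W); rewrite !ev_cons0 => ->.
  rewrite Cf_cons big_ord_recl take0 drop0 expr0 mul1r big1 ?addr0 // => m _.
  have := take_pos (m := bump 0 m) ca an isT.
  by case: (sumn _) => // k _; rewrite expr0n mul0r.
have c1 : (Pg * Ph)`_1 = 0.
  rewrite coefM big_ord_recr big_ord1 /= -!horner_coef0 Pg0.
  by rewrite Ph0 mulr0 mul0r addr0.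
rewrite hPP Cf_cons coef_sum in c1.
rewrite (eq_bigr (fun m : 'I_(size a).+1 => (sumn (take m a))%:R * Cf (drop m a) V)) in c1;
  last by move=> m _; rewrite Cf_map coefMC coef1_XaddC.
rewrite big_ord_recr /= take_size drop_size Cf_nil mulr1 in c1.
have sa0 : (0 < size a)%N by case: (a) an.
rewrite (eq_bigr (fun m : 'I_(size a) =>
   - (if nat_of_ord m == (size a).-1 then (sumn (take m a))%:R else 0))) in c1; last first.
  move=> m _; rewrite cV //.
  have -> : (m.+1 == size a) = (nat_of_ord m == (size a).-1) by apply/eqP/eqP; lia.
  by case: ifP => _ /=; rewrite ?mulr1n ?mulrN1 ?mulr0n ?oppr0 ?mulr0.
rewrite sumrN -big_mkcond (big_ord1_eq _ (fun m => (sumn (take m a))%:R)) ifT in c1; last first.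
  by rewrite prednK.
move/eqP: c1; rewrite addrC subr_eq0 eq_sym eqr_nat => /eqP e1.
have k0 := take_pos (m := (size a).-1) ca an.
have hd : (0 < sumn (drop (size a).-1 a))%N.
  have := take_pos (m := 1) (composition_drop (size a).-1 ca) (drop_nonnil _).
  rewrite prednK // => /(_ (leqnn _) isT) hp.
  by apply: leq_trans hp (sumn_take_le _ _).
have := cat_take_drop (size a).-1 a; move/(congr1 sumn); rewrite sumn_cat e1 => hhh.
by move: hd; rewrite -(addKn (sumn a) (sumn (drop _ a))) hhh subnn.
Qed.


Lemma int_mul1 (c x : int) : c * x = 1 -> c * c = 1.
Proof.
move=> h; have : c \is a intUnitRing.unitz by apply: (@intUnitRing.unitzPl c x); rewrite mulrC.
by rewrite qualifE => /orP [/eqP -> | /eqP ->]; rewrite ?mulr1 ?mulrNN ?mulr1.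
Qed.

Definition constpm (g : series) :=
  exists c : int, c * c = 1 /\ forall s, g s = if sumn s == 0%N then c else 0.

Lemma mulS0l g h s : (forall t, g t = 0) -> mulS g h s = 0.
Proof. by move=> h0; rewrite /mulS big1 // => t _; rewrite h0 mul0r. Qed.

Lemma mulS0r g h s : (forall t, h t = 0) -> mulS g h s = 0.
Proof. by move=> h0; rewrite /mulS big1 // => t _; rewrite h0 mulr0. Qed.

Lemma mulS_constl c g h s : (forall t, g t = if sumn t == 0%N then c else 0) ->
  mulS g h s = c * h s.
Proof.
elim: s g h => [|i s IH] g h hg; first by rewrite mulS_nil hg.
rewrite mulS_cons big_ord_recl /= subn0 (IH (slice g 0) (slice h i)) //.
  rewrite big1 ?addr0 // => j _; apply: mulS0l => t.
  by rewrite /slice hg /=.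
by move=> t; rewrite /slice hg.
Qed.

Lemma mulS_constr c g h s : (forall t, h t = if sumn t == 0%N then c else 0) ->
  mulS g h s = g s * c.
Proof.
elim: s g h => [|i s IH] g h hh; first by rewrite mulS_nil hh.
rewrite mulS_cons big_ord_recr /= subnn (IH (slice g i) (slice h 0)) //.
  rewrite big1 ?add0r // => j _; apply: mulS0r => t.
  by rewrite /slice hh /=; case: ifP => //; have := ltn_ord j; lia.
by move=> t; rewrite /slice hh.
Qed.

Lemma constpm_unit (P : series -> Prop) g : constpm g -> P g -> unitIn P g.
Proof.
move=> [c [cc hg]] Pg; exists g; split => // s.
rewrite (mulS_constl _ _ hg) hg /oneS; case: ifP => _; by rewrite ?cc ?mulr0.
Qed.

Lemma rz_zero g s : rz g -> sumn s = 0%N -> g s = g [::].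
Proof.
move=> rg hs; have -> : s = [::] ++ nseq (size s) 0%N.
  elim: s hs => [//|x s IH] /= hs; have x0 : x = 0%N by lia.
  have s0 : sumn s = 0%N by lia.
  by rewrite x0 {1}(IH s0).
by rewrite rz_pad.
Qed.

Lemma Lq_rz a : rz (Lq a).
Proof. by move=> s; rewrite /Lq /Mq compress_rcons0. Qed.

Lemma Lq_homog a s : composition a -> Lq a s != 0 -> sumn s = sumn a.
Proof.
move=> ca; rewrite Lq_coarse //; case: ifP => // hc _.
move: hc; rewrite -coarse_Dset ?composition_compress // => /andP [/eqP e _].
by rewrite -sumn_compress.
Qed.

Lemma Lq_top a : (0 < sumn a)%N -> Lq a [:: sumn a] = 1.
Proof.
move=> n0; rewrite /Lq /Mq /compress /=.
by case: (sumn a) n0 => //= n _; rewrite addn0 !eqxx.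
Qed.

Lemma Lq_nil a : composition a -> a != [::] -> Lq a [::] = 0.
Proof. by move=> ca an; rewrite Lq_coarse //=; case: (a) an. Qed.

Lemma key_K a g h : composition a -> a != [::] -> inK g -> inK h ->
  (forall s, mulS g h s = Lq a s) -> constpm g \/ constpm h.
Proof.
move=> ca an [rg [B1 bg]] [rh [B2 bh]] hf.
have n0 : (0 < sumn a)%N := sumn_pos ca an.
have fnz : exists s, Lq a s != 0 by exists [:: sumn a]; rewrite Lq_top // oner_eq0.
have [d [e [hde [hg hh]]]] := homog_factor rg rh bg bh hf (fun s => Lq_homog ca) fnz.
have ftop := Lq_top n0.
case: d hde hg => [|d] hde hg.
  left; exists (g [::]); split.
    apply: (@int_mul1 _ (h [:: sumn a])).
    rewrite -ftop -hf (mulS_constl (c := g [::])) // => t.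
    case: eqP => [/(rz_zero rg) //|ht]; apply/eqP/negPn/negP => /hg ht'; exact: ht.
  move=> t; case: eqP => [/(rz_zero rg) //|ht]; apply/eqP/negPn/negP => /hg ht'; exact: ht.
case: e hde hh => [|e] hde hh.
  right; exists (h [::]); split.
    apply: (@int_mul1 _ (g [:: sumn a])); rewrite mulrC.
    rewrite -ftop -hf (mulS_constr (c := h [::])) // => t.
    case: eqP => [/(rz_zero rh) //|ht]; apply/eqP/negPn/negP => /hh ht'; exact: ht.
  move=> t; case: eqP => [/(rz_zero rh) //|ht]; apply/eqP/negPn/negP => /hh ht'; exact: ht.
by exfalso; apply: (core ca an rg rh hg hh hde).
Qed.

Theorem proposition8p11 (alpha : seq nat) :
  alpha != [::] -> composition alpha ->
  irredIn inQSym (Lq alpha) /\ irredIn inK (Lq alpha).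
Proof.
move=> an ca.
have n0 : (0 < sumn alpha)%N := sumn_pos ca an.
have inKf : inK (Lq alpha).
  split; first exact: Lq_rz.
  exists (sumn alpha) => s hs; apply/eqP/negPn/negP => /(Lq_homog ca) e.
  by move: hs; rewrite e ltnn.
have qf : qsym (Lq alpha) by move=> s; rewrite /Lq /Mq compress_idem.
have fnz : exists s, Lq alpha s != 0 by exists [:: sumn alpha]; rewrite Lq_top // oner_eq0.
have nu : forall P, ~ unitIn P (Lq alpha).
  move=> P [u [_ hu]]; have := hu [::]; rewrite mulS_nil Lq_nil // mul0r /oneS /=.
  by move/eqP; rewrite eq_sym oner_eq0.
split; split => //.
- move=> g h gQ hQ hf; case: (key_K ca an gQ.1 hQ.1 hf) => hc.
    by left; apply: constpm_unit.
  by right; apply: constpm_unit.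
- move=> g h gK hK hf; case: (key_K ca an gK hK hf) => hc.
    by left; apply: constpm_unit.
  by right; apply: constpm_unit.
Qed.
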